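(* Fix a cooperative Markov game and a stationary joint policy $\pi$ as described in the context. For every $t_{loss}\in\{0,1,2,\ldots\}\cup\{\infty\}$, $$KL\big(\Gamma^{full}\,\|\,\Gamma^{img}_{0}\big)\;\ge\; KL\big(\Gamma^{full}\,\|\,\Gamma^{img}_{t_{loss}}\big).$$
   Context: Multiagent model: there are $N$ agents. Agent $i$ is modeled by a finite MDP $\mathcal{M}^i=(\mathcal{S}^i,s_I^i,\mathcal{A}^i,\mathcal{T}^i)$. Here $\mathcal{S}^i$ is a finite state set, $s_I^i\in\mathcal{S}^i$ is the initial state, $\mathcal{A}^i$ is a finite action set, and $\mathcal{T}^i:\mathcal{S}^i\times\mathcal{A}^i\to\Delta(\mathcal{S}^i)$ is the transition kernel. The cooperative Markov game has joint state set $\mathbf{S}=\prod_i\mathcal{S}^i$, joint initial state $\mathbf{s}_I=(s_I^1,\dots,s_I^N)$, and joint action set $\mathbf{A}=\prod_i\mathcal{A}^i$. Its transition kernel is $\mathbf{T}(\mathbf{s},\mathbf{a},\mathbf{y})=\prod_{i}\mathcal{T}^i(s^i,a^i,y^i)$. A stationary joint policy is a map $\pi:\mathbf{S}\to\Delta(\mathbf{A})$. A joint path is an infinite sequence $\mathbf{s}_0\mathbf{a}_0\mathbf{s}_1\mathbf{a}_1\cdots\in(\mathbf{S}\times\mathbf{A})^\omega$ with $\mathbf{s}_0=\mathbf{s}_I$. All random sampling below is mutually independent given the stated conditioning. Full-communication execution: at each time $t$, $\mathbf{a}_t\sim\pi(\mathbf{s}_t)$ is drawn once for the whole team. Each agent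 $i$ then moves to $s^i_{t+1}\sim\mathcal{T}^i(s^i_t,a^i_t)$. $\Gamma^{full}$ denotes the resulting distribution over joint paths. Imaginary play with loss time $t_{loss}\in\{0,1,\dots\}\cup\{\infty\}$ (Algorithm 1): - For $t<t_{loss}$, the team acts exactly as under full communication. Each agent $i$ records $\hat s^j_{t,i}=s^j_t$ for all $j\ne i$, and records $\hat{\mathbf a}_{t,i}=\mathbf a_t$. - For $t\ge t_{loss}$, each agent $i$ acts separately and does not observe the others. First it sets its imaginary teammate states. If $t=0$, it sets $\hat s^j_{0,i}=s_I^j$ for $j\neq i$. Otherwise it samples $\hat s^j_{t,i}\sim\mathcal{T}^j(\hat s^j_{t-1,i},\hat a^j_{t-1,i})$ for $j\ne i$, where $\hat a^j_{t-1,i}$ is the $j$-th component of $\hat{\mathbf a}_{t-1,i}$. - Agent $i$ then samples its own joint action $\hat{\mathbf a}_{t,i}\sim\pi(\hat s^1_{t,i},\dots,\hat s^{i-1}_{t,i},s^i_t,\hat s^{i+1}_{t,i},\dots,\hat s^N_{t,i})$. - Agent $i$ executes only its own component $\hat a^i_{t,i}$, and moves to $s^i_{t+1}\sim\mathcal{T}^i(s^i_t,\hat a^i_{t,i})$. - The realized joint action at time $t$ is $\mathbf a_t=(\hat a^1_{t,1},\dots,\hat a^N_{t,N})$. $\Gamma^{img}_{t_{loss}}$ denotes the induced distribution over realized joint paths. Note $\Gamma^{img}_\infty=\Gamma^{full}$. $KL$ denotes Kullback–Leibler divergence between distributions on joint paths. *)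

(* Defs.v *)
From HB Require Import structures.
From mathcomp Require Import all_boot all_order all_algebra.
From mathcomp Require Import all_classical all_reals all_analysis.
Set Implicit Arguments. Unset Strict Implicit. Unset Printing Implicit Defensive.
Import Order.TTheory GRing.Theory Num.Theory.
Local Open Scope ring_scope.

Section Game.
Variable R : realType.
Variable N : nat.
Variables (S A : 'I_N -> finType).

Definition jstate := {dffun forall i : 'I_N, S i}.
Definition jact := {dffun forall i : 'I_N, A i}.

Variable sI : forall i, S i.
Variable T : forall i, S i -> A i -> S i -> R.
Variable pi : jstate -> jact -> R.

Definition jinit : jstate := [ffun i => sI i].

Definition jtrans (s : jstate) (a : jact) (y : jstate) : R :=
  \prod_(i < N) T (s i) (a i) (y i).

Definition ind (b : bool) : R := (b : nat)%:R.

Definition get (X : Type) (H : nat) (x : {ffun 'I_H -> X}) (t : nat) : option X :=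
  omap x (insub t : option 'I_H).

(* loss time: Some k = k, None = infinity; communication is lost at time t iff t >= t_loss *)
Definition lost (tl : option nat) (t : nat) : bool :=
  if tl is Some k then (k <= t)%N else false.

Section Horizon.
Variable tl : option nat.
Variable H : nat.
Definition prefix := {ffun 'I_H -> (jstate * jact)%type}.
(* hidden variables: for each agent i and time t, its record
   (hat s_{t,i}, hat a_{t,i}); the i-th component of hat s_{t,i} stands for s^i_t *)
Definition hidden := {ffun 'I_N -> {ffun 'I_H -> (jstate * jact)%type}}.

Definition state_fac (x : prefix) (t : nat) : R :=
  match get x t with
  | None => 0
  | Some (st, _) =>
      if t is u.+1 then
        match get x u with
        | Some (sp, ap) => jtrans sp ap st
        | None => 0
        end
      else ind (st == jinit)
  end.

Definition act_fac (x : prefix) (h : hidden) (t : nat) : R :=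
  match get x t with
  | None => 0
  | Some (st, at0) =>
    if ~~ lost tl t then
      (* full communication: one joint draw, every agent records (s_t, a_t) *)
      pi st at0 * \prod_(i < N) ind (get (h i) t == Some (st, at0))
    else
      (* imaginary play: each agent samples imaginary teammates and its own joint action *)
      \prod_(i < N)
        match get (h i) t with
        | None => 0
        | Some (hs, ha) =>
            ind (hs i == st i) *
            (\prod_(j < N | j != i)
               (if t is u.+1 then
                  match get (h i) u with
                  | Some (hsp, hap) => T (hsp j) (hap j) (hs j)
                  | None => 0
                  end
                else ind (hs j == sI j))) *
            pi hs ha * ind (ha i == at0 i)
        end
  end.

Definition joint (x : prefix) (h : hidden) : R :=
  \prod_(t < H) (state_fac x t * act_fac x h t).

(* marginal law of the realized horizon-H prefix under Algorithm 1 with loss time tl *)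
Definition Gamma_img (x : prefix) : R := \sum_(h : hidden) joint x h.
End Horizon.

Definition Gamma_full := Gamma_img None.

Local Open Scope ereal_scope.
Definition kl_term (p q : R) : \bar R :=
  if p == 0%R then 0 else if q == 0%R then +oo else (p * ln (p / q))%:E.

Definition KL_horizon (P Q : forall H, prefix H -> R) (H : nat) : \bar R :=
  \sum_(x : prefix H) kl_term (P H x) (Q H x).

(* KL divergence between the laws on infinite joint paths: supremum over horizons
   of the KL divergences of the finite-dimensional marginals *)
Definition KL (P Q : forall H, prefix H -> R) : \bar R :=
  ereal_sup (range (KL_horizon P Q)).
End Game.

(* Main.v *)
Require Import Defs.
From HB Require Import structures.
From mathcomp Require Import all_boot all_order all_algebra.
From mathcomp Require Import all_classical all_reals all_analysis.
From mathcomp Require Import ring lra.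
Import Order.TTheory GRing.Theory Num.Theory.
Local Open Scope ring_scope.

Lemma sum_dffun_prod (R : comRingType) (I : finType) (T_ : I -> finType)
  (F : forall i, T_ i -> R) :
  \sum_(s : {dffun forall i, T_ i}) \prod_i F i (s i) = \prod_i \sum_(y : T_ i) F i y.
Proof.
rewrite (reindex (@dffun_of_fprod I T_)); last exact/onW_bij/dffun_of_fprod_bij.
pose P_ := fun i => [ffun y : T_ i => F i y].
transitivity (\sum_(t : fprod T_) \prod_(i in I) P_ i (t i)).
  by apply: eq_bigr => t _; apply: eq_bigr => i _; rewrite !ffunE.
rewrite (@big_fprod _ 0 1 *%R +%R) /=.
transitivity (\prod_i \sum_(j in tagged_with T_ i) untag 0 (P_ i) j); last first.
  apply: eq_bigr => i _; rewrite (big_tag (op := +%R) (fun i y => F i y) i) /=.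
  apply: eq_bigr => j _; rewrite /untag; case: eqP => // e. by rewrite ffunE.
by rewrite bigA_distr_big_dep.
Qed.

Lemma getE (Y : Type) (H : nat) (g : {ffun 'I_H -> Y}) (t : 'I_H) :
  Defs.get g t = Some (g t).
Proof. by rewrite /Defs.get valK. Qed.

Lemma getE_lt (Y : Type) (H : nat) (g : {ffun 'I_H -> Y}) (u : nat) (hu : (u < H)%N) :
  Defs.get g u = Some (g (Ordinal hu)).
Proof. by rewrite /Defs.get (insubT (fun n => n < H)%N hu). Qed.

Arguments getE_lt {Y H} g {u} hu.
Arguments getE {Y H} g t.

Lemma ind_ge0 (R : realType) b : 0 <= ind R b.
Proof. by rewrite /ind ler0n. Qed.

Lemma indT (R : realType) : ind R true = 1.
Proof. by rewrite /ind /= mulr1n. Qed.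
Lemma indF (R : realType) : ind R false = 0.
Proof. by []. Qed.

Definition Mf (R : realType) (X : finType) (P : X -> R) (Y : eqType) (f : X -> Y) (x : X) : R :=
  \sum_(y | f y == f x) P y.

Arguments Mf {R X} P {Y} f x.

Section CMI.
Variables (R : realType) (X : finType) (P : X -> R).
Hypothesis P_ge0 : forall x, 0 <= P x.

Lemma MfE (Y : eqType) (f : X -> Y) x : Mf P f x = \sum_y ((f y == f x)%:R * P y).
Proof.
rewrite /Mf big_mkcond; apply: eq_bigr => y _; case: eqP => _; by rewrite ?mul1r ?mul0r.
Qed.

Lemma Mf_ge (Y : eqType) (f : X -> Y) x : P x <= Mf P f x.
Proof. by rewrite /Mf (bigD1 x) //= lerDl; apply: sumr_ge0 => y _. Qed.

Lemma Mf_ge0 (Y : eqType) (f : X -> Y) x : 0 <= Mf P f x.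
Proof. by apply: sumr_ge0 => y _. Qed.

Lemma Mf_inv (Y : eqType) (f : X -> Y) x y : f x = f y -> Mf P f x = Mf P f y.
Proof. by rewrite /Mf => ->. Qed.

Lemma ln_le_sub1 (r : R) : 0 < r -> ln r <= r - 1.
Proof.
move=> r0; have e : 1 + (r - 1) = r by ring.
have := @le_ln1Dx R (r - 1); rewrite e; apply; lra.
Qed.

Lemma cmi (Y0 Y1 Y2 : eqType) (f0 : X -> Y0) (f1 : X -> Y1) (f2 : X -> Y2) :
  (forall x y, f1 x = f1 y -> f0 x = f0 y) ->
  (forall x y, f2 x = f2 y -> f0 x = f0 y) ->
  0 <= \sum_x P x * (ln (Mf P (fun z => (f1 z, f2 z)) x) + ln (Mf P f0 x)
                     - ln (Mf P f1 x) - ln (Mf P f2 x)).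
Proof.
move=> h1 h2.
set M12 := Mf P (fun z => (f1 z, f2 z)); set M0 := Mf P f0.
set M1 := Mf P f1; set M2 := Mf P f2.
pose r x := M1 x * M2 x / (M12 x * M0 x).
have stepA : forall x, P x - P x * r x <=
    P x * (ln (M12 x) + ln (M0 x) - ln (M1 x) - ln (M2 x)).
  move=> x; have [->|nz] := eqVneq (P x) 0; first by rewrite !mul0r subr0.
  have Px : 0 < P x by rewrite lt_def nz P_ge0.
  have p12 : 0 < M12 x by apply: (lt_le_trans Px); apply: Mf_ge.
  have p0 : 0 < M0 x by apply: (lt_le_trans Px); apply: Mf_ge.
  have p1 : 0 < M1 x by apply: (lt_le_trans Px); apply: Mf_ge.
  have p2 : 0 < M2 x by apply: (lt_le_trans Px); apply: Mf_ge.
  have rpos : 0 < r x by rewrite /r divr_gt0 // mulr_gt0.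
  have lnr : ln (r x) = ln (M1 x) + ln (M2 x) - ln (M12 x) - ln (M0 x).
    rewrite /r ln_div ?posrE ?mulr_gt0 // !lnM ?posrE //; ring.
  have := @ln_le_sub1 (r x) rpos; rewrite lnr => hl.
  rewrite -[X in X - _]mulr1 -mulrBr; apply: ler_wpM2l; first exact: P_ge0.
  lra.
have inner : forall y z,
    \sum_x ((f1 z == f1 x)%:R * (f2 y == f2 x)%:R * (P x / (M12 x * M0 x)))
      <= (f0 z == f0 y)%:R / M0 y.
  move=> y z.
  case: (pickP (fun x => (f1 x == f1 z) && (f2 x == f2 y)))
      => [x0 /andP [/eqP e1 /eqP e2] | none]; last first.
    rewrite big1 ?divr_ge0 ?ler0n ?Mf_ge0 // => x _.
    have := none x; rewrite /= (eq_sym (f1 x)) (eq_sym (f2 x)).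
    case: (f1 z == f1 x); case: (f2 y == f2 x) => //= _; by rewrite ?(mul0r, mulr0).
  have f0zy : f0 z = f0 y by rewrite -(h1 _ _ e1) (h2 _ _ e2).
  rewrite f0zy eqxx mul1r.
  set c := M12 x0.
  have -> : \sum_x ((f1 z == f1 x)%:R * (f2 y == f2 x)%:R * (P x / (M12 x * M0 x)))
     = (\sum_x (((f1 x, f2 x) == (f1 x0, f2 x0))%:R * P x)) / (c * M0 y).
    rewrite big_distrl /=; apply: eq_bigr => x _.
    have [Ex|nE] := eqVneq (f1 x, f2 x) (f1 x0, f2 x0).
      have M12x : M12 x = c by rewrite /M12 /c (@Mf_inv _ (fun z => (f1 z, f2 z)) x x0 Ex).
      case: Ex => E1 E2.
      have M0x : M0 x = M0 y by rewrite /M0 (@Mf_inv _ f0 x y (h2 x y _)) // E2.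
      by rewrite M12x M0x -e1 -e2 E1 E2 !eqxx /= !mul1r.
    rewrite -e1 -e2 mul0r mul0r.
    case: eqP => [E1|]; last by rewrite !mul0r.
    case: eqP => [E2|]; last by rewrite mulr0 mul0r.
    by move: nE; rewrite -E1 -E2 eqxx.
  rewrite -(@MfE _ (fun z => (f1 z, f2 z)) x0) -/c.
  have [->|cnz] := eqVneq c 0; first by rewrite !mul0r invr0 mulr0 invr_ge0 Mf_ge0.
  by rewrite invfM mulVKf.
have expand : \sum_x P x * r x = \sum_y \sum_z (P y * P z) *
    \sum_x ((f1 z == f1 x)%:R * (f2 y == f2 x)%:R * (P x / (M12 x * M0 x))).
  transitivity (\sum_x \sum_z \sum_y ((f1 z == f1 x)%:R * P z) *
      ((f2 y == f2 x)%:R * P y) * (P x / (M12 x * M0 x))).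
    apply: eq_bigr => x _; rewrite /r /M1 /M2 !MfE.
    set A := \sum_(z : X) ((f1 z == f1 x)%:R * P z).
    set B := \sum_(y : X) ((f2 y == f2 x)%:R * P y).
    have -> : P x * (A * B / (M12 x * M0 x)) = A * B * (P x / (M12 x * M0 x)) by ring.
    rewrite /A /B big_distrl big_distrl /=; apply: eq_bigr => z _.
    by rewrite big_distrr big_distrl /=.
  rewrite exchange_big /=.
  under eq_bigr => z _ do rewrite exchange_big /=.
  rewrite exchange_big /=.
  apply: eq_bigr => y _; apply: eq_bigr => z _; rewrite big_distrr /=.
  by apply: eq_bigr => x _; ring.
have stepB : \sum_x P x * r x <= \sum_x P x.
  rewrite expand.
  apply: le_trans (_ : _ <= \sum_y \sum_z (P y * P z) * ((f0 z == f0 y)%:R / M0 y)) _.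
    apply: ler_sum => y _; apply: ler_sum => z _; apply: ler_wpM2l.
      by rewrite mulr_ge0.
    exact: inner.
  have -> : \sum_y \sum_z (P y * P z) * ((f0 z == f0 y)%:R / M0 y) =
      \sum_y P y / M0 y * M0 y.
    apply: eq_bigr => y _; rewrite [X in _ = _ * X]/M0 MfE big_distrr /=.
    by apply: eq_bigr => z _; ring.
  apply: ler_sum => y _.
  have [->|nz] := eqVneq (M0 y) 0; first by rewrite invr0 !mulr0.
  by rewrite divfK.
apply: le_trans (_ : \sum_x (P x - P x * r x) <= _).
  by rewrite sumrB subr_ge0.
by apply: ler_sum => x _; exact: stepA.
Qed.
End CMI.

Section Main.
Variables (R : realType) (N : nat) (S A : 'I_N -> finType).
Variables (sI : forall i, S i) (T : forall i, S i -> A i -> S i -> R)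
  (pi : jstate S -> jact A -> R).
Hypotheses (T_ge0 : forall i s a y, 0 <= T i s a y)
  (T_sum1 : forall i s a, \sum_(y : S i) T i s a y = 1)
  (pi_ge0 : forall s a, 0 <= pi s a)
  (pi_sum1 : forall s, \sum_(a : jact A) pi s a = 1).

Variable H : nat.
Notation X := (Defs.prefix S A H).
Notation sf := (@state_fac R N S A sI T H).
Notation ind := (ind R).

Definition proj (i : 'I_N) (x : X) : {ffun 'I_H -> (S i * A i)%type} :=
  [ffun t => ((x t).1 i, (x t).2 i)].

Definition own (i : 'I_N) (x : X) (t : nat) : R :=
  match Defs.get (proj i x) t with
  | None => 0
  | Some (st, _) =>
      if t is u.+1 then
        match Defs.get (proj i x) u with
        | Some (sp, ap) => T i sp ap st
        | None => 0
        end
      else ind (st == sI i)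
  end.

Lemma ind_eq_dffun (s : jstate S) :
  ind (s == jinit sI) = \prod_i ind (s i == sI i).
Proof.
case: eqP => [->|ne].
  by rewrite indT big1 // => i _; rewrite /jinit ffunE eqxx indT.
have [i ni] : exists i, s i != sI i.
  apply/existsP; rewrite -negb_forall; apply/negP => /forallP h; apply: ne.
  by apply/ffunP => i; rewrite /jinit ffunE; exact/eqP/(h i).
by rewrite indF (bigD1 i) //= (negbTE ni) indF mul0r.
Qed.

Lemma sf_own (x : X) (t : 'I_H) : sf x t = \prod_i own i x t.
Proof.
rewrite /state_fac /own getE.
under eq_bigr => i _ do rewrite getE ffunE.
case: t => [[|u] hu] /=.
  by case: (x _) => st a /=; rewrite ind_eq_dffun.
rewrite (getE_lt x (ltnW hu)).
under [RHS]eq_bigr => i _ do rewrite (getE_lt _ (ltnW hu)) ffunE.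
rewrite /jtrans; case: (x (Ordinal hu)) => st a /=.
by case: (x (Ordinal _)) => sp ap /=.
Qed.


Definition Pre (k : nat) (x : X) : R :=
  \prod_(t < H | (t < k)%N) (sf x t * pi (x t).1 (x t).2).
Definition OWN (k : nat) (x : X) (i : 'I_N) : R :=
  \prod_(t < H | (k <= t)%N) own i x t.
Definition lostfac (st : jstate S) (at0 : jact A) (g : X) (i : 'I_N) (t : nat) : R :=
        match Defs.get g t with
        | None => 0
        | Some (hs, ha) =>
            ind (hs i == st i) *
            (\prod_(j < N | j != i)
               (if t is u.+1 then
                  match Defs.get g u with
                  | Some (hsp, hap) => T j (hsp j) (hap j) (hs j)
                  | None => 0
                  end
                else ind (hs j == sI j))) *
            pi hs ha * ind (ha i == at0 i)
        end.
Definition Gt (k : nat) (x : X) (i : 'I_N) (t : 'I_H) (g : X) : R :=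
  if (t < k)%N then ind (Defs.get g t == Some (x t))
  else lostfac (x t).1 (x t).2 g i t.
Definition G k x i (g : X) := \prod_(t < H) Gt k x i t g.
Definition C k x i := \sum_(g : X) G k x i g.

Lemma actE tl k (Hl : forall t : 'I_H, lost tl t = (k <= t)%N) (x : X)
  (h : hidden S A H) (t : 'I_H) :
  act_fac sI T pi tl x h t =
  (if (t < k)%N then pi (x t).1 (x t).2 else 1) * \prod_i Gt k x i t (h i).
Proof.
rewrite /act_fac getE Hl /Gt; case: (ltnP t k) => kt /=.
  by case: (x t) => st at0 /=.
by case: (x t) => st at0 /=; rewrite mul1r.
Qed.

Lemma fact tl k (Hl : forall t : 'I_H, lost tl t = (k <= t)%N) (x : X) :
  Gamma_img sI T pi tl x = Pre k x * \prod_i (OWN k x i * C k x i).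
Proof.
rewrite /Gamma_img /joint.
have E: forall h : hidden S A H,
  \prod_(t < H) (sf x t * act_fac sI T pi tl x h t) =
  ((\prod_(t < H) sf x t) * \prod_(t < H | (t < k)%N) pi (x t).1 (x t).2) *
  \prod_i G k x i (h i).
  move=> h; under [LHS]eq_bigr => t _ do rewrite (@actE tl k Hl).
  rewrite big_split /= big_split /= -big_mkcond /= mulrA; congr (_ * _).
  by rewrite /G exchange_big.
rewrite (eq_bigr (fun h : hidden S A H => ((\prod_(t < H) sf x t) * \prod_(t < H | (t < k)%N) pi (x t).1 (x t).2) *
  \prod_i G k x i (h i))); last by move=> h _; exact: E.
rewrite -big_distrr /= -bigA_distr_bigA /=.
have Esf: \prod_(t < H) sf x t =
    \prod_(t < H | (t < k)%N) sf x t * \prod_i OWN k x i.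
  rewrite (bigID (fun t : 'I_H => (t < k)%N)) /=; congr (_ * _).
  under eq_bigr => t _ do rewrite sf_own.
  rewrite exchange_big /=; apply: eq_bigr => i _; apply: eq_bigl => t.
  by rewrite -leqNgt.
rewrite Esf /Pre big_split /= big_split /= /C.
by rewrite -!mulrA; congr (_ * _); rewrite mulrCA.
Qed.

Lemma PE (x : X) : Gamma_full sI T pi x = Pre H x.
Proof.
rewrite /Gamma_full (@fact None H _ x); last by move=> t; rewrite /lost leqNgt ltn_ord.
suff -> : \prod_i (OWN H x i * C H x i) = 1 by rewrite mulr1.
apply: big1 => i _.
rewrite /OWN big_pred0 => [|t]; last by rewrite leqNgt ltn_ord.
rewrite mul1r /C (bigD1 x) //= big1 => [|g ng].
  by rewrite addr0 /G big1 // => t _; rewrite /Gt ltn_ord getE eqxx indT.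
have [t nt] : exists t, g t != x t.
  apply/existsP; rewrite -negb_forall; apply/negP => /forallP h; move/negP: ng; apply.
  by apply/eqP/ffunP => t; exact/eqP/(h t).
rewrite /G (bigD1 t) //= /Gt ltn_ord getE.
have -> : (Some (g t) == Some (x t)) = false by apply/negbTE.
by rewrite indF mul0r.
Qed.


Notation P := (@Gamma_full R N S A sI T pi H).

Lemma own_ge0 i x (t : nat) : 0 <= own i x t.
Proof.
rewrite /own; case: (Defs.get _ t) => [[st a]|] //.
case: t => [|u]; first exact: ind_ge0.
by case: (Defs.get _ u) => [[sp ap]|].
Qed.

Lemma sf_ge0 x (t : 'I_H) : 0 <= sf x t.
Proof. by rewrite sf_own; apply: prodr_ge0 => i _; exact: own_ge0. Qed.

Lemma Pre_ge0 k x : 0 <= Pre k x.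
Proof. by apply: prodr_ge0 => t _; rewrite mulr_ge0 ?sf_ge0. Qed.

Lemma P_ge0 x : 0 <= P x.
Proof. by rewrite PE Pre_ge0. Qed.

Definition mproj (m : nat -> 'I_N -> bool) (x : X) :
  {ffun 'I_H -> {dffun forall i : 'I_N, option (S i * A i)}} :=
  [ffun t : 'I_H => [ffun i : 'I_N => if m t i then Some ((x t).1 i, (x t).2 i) else None]].

Definition M m x := \sum_(y : X | mproj m y == mproj m x) P y.

Lemma mproj_eqE m (y x : X) :
  (mproj m y == mproj m x) =
  [forall t : 'I_H, forall i : 'I_N, m t i ==> (((y t).1 i == (x t).1 i) && ((y t).2 i == (x t).2 i))].
Proof.
apply/eqP/forallP => [E t|h].
  apply/forallP => i; apply/implyP => mti.
  move/(congr1 (fun f : {ffun 'I_H -> {dffun forall i : 'I_N, option (S i * A i)}} => f t i)): E.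
  rewrite !ffunE mti => -[-> ->].
  by rewrite !eqxx.
apply/ffunP => t; apply/ffunP => i; rewrite !ffunE; case: ifP => // mti.
by move/forallP: (h t) => /(_ i); rewrite mti /= => /andP [/eqP -> /eqP ->].
Qed.

Lemma pairE (p q : (jstate S * jact A)%type) :
  (forall i, p.1 i = q.1 i /\ p.2 i = q.2 i) -> p = q.
Proof.
case: p q => [a b] [c d] /= h; congr pair; apply/ffunP => i; by case: (h i).
Qed.

Lemma M_ge m x : P x <= M m x.
Proof.
rewrite /M (bigD1 x) //= lerDl; apply: sumr_ge0 => y _; exact: P_ge0.
Qed.

Lemma sf_congr (x y : X) (t : 'I_H) :
  (forall u : 'I_H, (u <= t)%N -> y u = x u) -> sf y t = sf x t.
Proof.
move=> h.
have E: forall n, (n <= t)%N -> Defs.get y n = Defs.get x n.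
  move=> n nt; rewrite /Defs.get; case: insubP => [u _ eu|_] //=.
  by rewrite h // eu.
rewrite /state_fac (E t) //.
move: h E; case: t => [[|u] hu] h E //=.
by rewrite (E u) // leqnSn.
Qed.

Lemma lostfacE (st : jstate S) (at0 : jact A) (y : X) i (t : 'I_H) :
  (y t).1 i = st i -> (y t).2 i = at0 i ->
  lostfac st at0 y i t = (\prod_(j | j != i) own j y t) * pi (y t).1 (y t).2.
Proof.
move=> e1 e2; rewrite /lostfac /own getE.
under [in RHS]eq_bigr => j _ do rewrite getE ffunE.
move: e1 e2; move: t => [[|u] hu] /=.
  by case: (y _) => hs ha /= -> ->; rewrite !eqxx !indT mul1r mulr1.
rewrite (getE_lt y (ltnW hu)) => e1 e2.
under [in RHS]eq_bigr => j _ do rewrite (getE_lt _ (ltnW hu)) ffunE.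
move: e1 e2; case: (y (Ordinal hu)) => hs ha /= -> ->; rewrite !eqxx !indT mul1r mulr1.
by case: (y (Ordinal _)) => sp ap.
Qed.

Lemma WE k i0 x :
  M (fun t i => (t < k)%N || (i == i0)) x = Pre k x * OWN k x i0 * C k x i0.
Proof.
rewrite /M big_mkcond /C big_distrr /=; apply: eq_bigr => y _.
case: ifP => [E | NE].
  have Ag: forall (t : 'I_H) i, (t < k)%N || (i == i0) ->
      (y t).1 i = (x t).1 i /\ (y t).2 i = (x t).2 i.
    move: E; rewrite mproj_eqE => /forallP h t i mti.
    by move/forallP: (h t) => /(_ i); rewrite mti => /andP [/eqP -> /eqP ->].
  have Ey: forall t : 'I_H, (t < k)%N -> y t = x t.
    by move=> t tk; apply: pairE => i; apply: Ag; rewrite tk.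
  have Pi: proj i0 y = proj i0 x.
    by apply/ffunP => t; rewrite !ffunE; case: (Ag t i0); rewrite ?eqxx ?orbT // => -> ->.
  rewrite PE [Pre H y]/Pre /G (bigID (fun t : 'I_H => (t < k)%N)) /=.
  rewrite [in RHS](bigID (fun t : 'I_H => (t < k)%N)) /=.
  rewrite [X in _ = _ * _ * (X * _)]big1 ?mul1r => [|t tk]; last first.
    by rewrite /Gt tk getE Ey // eqxx indT.
  rewrite -mulrA; congr (_ * _).
    rewrite /Pre; apply: eq_big => [t|t /andP [_ tk]]; first by rewrite ltn_ord.
    rewrite Ey //; congr (_ * _); apply: sf_congr => u ut.
    by apply: Ey; apply: leq_ltn_trans tk.
  rewrite (eq_bigl (fun t : 'I_H => ~~ (t < k)%N)) => [|t]; last by rewrite ltn_ord.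
  rewrite /OWN [X in _ = X * _](eq_bigl (fun t : 'I_H => ~~ (t < k)%N)) => [|t]; last by rewrite -leqNgt.
  rewrite -big_split /=.
  apply: eq_bigr => t tk.
  rewrite /Gt (negbTE tk) (@lostfacE _ _ y i0 t); last 2 first.
  - by case: (Ag t i0); rewrite ?eqxx ?orbT.
  - by case: (Ag t i0); rewrite ?eqxx ?orbT.
  rewrite sf_own (bigD1 i0) //= mulrA; congr (_ * _).
  by rewrite /own Pi.
move/negbT: NE; rewrite mproj_eqE negb_forall => /existsP [t].
rewrite negb_forall => /existsP [i]; rewrite negb_imply => /andP [mti nag].
rewrite /G (bigD1 t) //= /Gt.
case: ifP => tk.
  have nyx : y t != x t by apply: contraNneq nag => ->; rewrite !eqxx.
  rewrite getE.
  have -> : (Some (y t) == Some (x t)) = false by apply/negbTE.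
  by rewrite indF !mul0r mulr0.
move: mti; rewrite tk /= => /eqP ei; subst i.
move: nag; rewrite /lostfac getE; case: (y t) => hs ha /=.
by case/nandP => /negbTE ->; rewrite indF ?(mul0r, mulr0).
Qed.


Lemma mpre_eqE k (y x : X) :
  (mproj (fun t _ => (t < k)%N) y == mproj (fun t _ => (t < k)%N) x) =
  [forall t : 'I_H, (t < k)%N ==> (y t == x t)].
Proof.
rewrite mproj_eqE; apply/forallP/forallP => h t.
  apply/implyP => tk; apply/eqP/pairE => i.
  by move/forallP: (h t) => /(_ i); rewrite tk => /andP [/eqP -> /eqP ->].
apply/forallP => i; apply/implyP => tk.
by move/implyP: (h t) => /(_ tk)/eqP ->; rewrite !eqxx.
Qed.

Definition upd (x : X) (ko : 'I_H) (v : (jstate S * jact A)%type) : X :=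
  [ffun t => if t == ko then v else x t].

Lemma sum_sf_upd (x : X) (ko : 'I_H) :
  \sum_(v : (jstate S * jact A)%type) sf (upd x ko v) ko * pi v.1 v.2 = 1.
Proof.
transitivity (\sum_(s : jstate S) \sum_(a : jact A) sf (upd x ko (s, a)) ko * pi s a).
  by rewrite pair_bigA; apply: eq_bigr => -[s a].
case: ko => [[|u] hu].
  rewrite /state_fac.
  under eq_bigr => s _ do under eq_bigr => a _ do rewrite (getE_lt _ hu) ffunE eqxx /=.
  under eq_bigr => s _ do rewrite -big_distrr /= pi_sum1 mulr1.
  rewrite (bigD1 (jinit sI)) //= eqxx indT big1 ?addr0 // => s /negbTE ->.
  by rewrite indF.
rewrite /state_fac.
have hu' : (u < H)%N by apply: ltnW.
have ne : (Ordinal hu' == Ordinal hu) = false by rewrite -val_eqE /= ltn_eqF.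
under eq_bigr => s _ do under eq_bigr => a _ do
  rewrite (getE_lt _ hu) ffunE eqxx /= (getE_lt _ hu') ffunE ne.
case E: (x (Ordinal hu')) => [sp ap].
under eq_bigr => s _ do rewrite -big_distrr /= pi_sum1 mulr1.
rewrite /jtrans (@sum_dffun_prod R _ S (fun i y => T i (sp i) (ap i) y)); apply: big1 => i _; exact: T_sum1.
Qed.

Lemma stoch k x : M (fun t _ => (t < k)%N) x = Pre k x.
Proof.
move: {2}(H - k)%N (erefl (H - k)%N) => d; elim: d k x => [|d IH] k x hd.
  have Hk : (H <= k)%N by rewrite -subn_eq0 hd.
  rewrite /M (eq_bigl (pred1 x)) => [|y]; last first.
    rewrite mpre_eqE /=; apply/forallP/eqP => [h|-> t]; last by rewrite eqxx implybT.
    apply/ffunP => t; apply/eqP; move/implyP: (h t); apply.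
    exact: leq_trans (ltn_ord t) Hk.
  rewrite big_pred1_eq PE /Pre; apply: eq_bigl => t.
  by rewrite ltn_ord (leq_trans (ltn_ord t) Hk).
have hk : (k < H)%N by rewrite -subn_gt0 hd.
pose ko : 'I_H := Ordinal hk.
rewrite /M (partition_big (fun y : X => y ko) xpredT) //=.
transitivity (\sum_(v : (jstate S * jact A)%type) M (fun t _ => (t < k.+1)%N) (upd x ko v)).
  apply: eq_bigr => v _; rewrite /M; apply: eq_bigl => y.
  rewrite !mpre_eqE; apply/andP/forallP => [[/forallP h /eqP yv] t | h].
    apply/implyP => tk1; rewrite ffunE; have [->|ne] := eqVneq t ko.
      by rewrite yv.
    move/implyP: (h t); apply.
    rewrite ltnS leq_eqVlt in tk1; case/orP: tk1 => // /eqP tk.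
    by move: ne; rewrite -val_eqE /= tk eqxx.
  split.
    apply/forallP => t; apply/implyP => tk.
    have tko : (t == ko) = false by rewrite -val_eqE /= ltn_eqF.
    by move/implyP: (h t) => /(_ (ltnW tk)); rewrite ffunE tko.
  by move/implyP: (h ko) => /(_ (ltnSn k)); rewrite ffunE eqxx.
have hd' : (H - k.+1)%N = d by rewrite subnS hd.
under eq_bigr => v _ do rewrite (IH _ _ hd').
transitivity (\sum_(v : (jstate S * jact A)%type)
   Pre k x * (sf (upd x ko v) ko * pi v.1 v.2)).
  apply: eq_bigr => v _; rewrite /Pre (bigD1 ko) /=; last by rewrite ltnSn.
  rewrite mulrC ffunE eqxx; congr (_ * _); apply: eq_big => t.
    by rewrite -val_eqE /= ltnS; case: ltngtP.
  move=> /andP [tk1 tko].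
  have tk : (t < k)%N.
    by move: tk1 tko; rewrite -val_eqE /= ltnS leq_eqVlt => /orP [/eqP ->|]; rewrite ?eqxx.
  have Eu : forall u : 'I_H, (u <= t)%N -> upd x ko v u = x u.
    move=> u ut; rewrite ffunE.
    have -> : (u == ko) = false by rewrite -val_eqE /= ltn_eqF // (leq_ltn_trans ut tk).
    by [].
  by rewrite (@sf_congr x (upd x ko v) t Eu) (Eu t (leqnn t)).
by rewrite -big_distrr /= sum_sf_upd mulr1.
Qed.


Lemma M_ext m m' x : (forall t i, m t i = m' t i) -> M m x = M m' x.
Proof.
move=> h; have -> : m = m' by apply/funext => t; apply/funext => i; exact: h.
by [].
Qed.

Lemma mproj_sub (m0 m1 : nat -> 'I_N -> bool) (y x : X) : (forall t i, m0 t i -> m1 t i) ->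
  mproj m1 y = mproj m1 x -> mproj m0 y = mproj m0 x.
Proof.
move=> h /eqP; rewrite mproj_eqE => /forallP H1; apply/eqP; rewrite mproj_eqE.
apply/forallP => t; apply/forallP => i; apply/implyP => mi.
by move/forallP: (H1 t) => /(_ i) /implyP; apply; apply: h.
Qed.

Lemma M_pair m1 m2 x :
  Mf P (fun z => (mproj m1 z, mproj m2 z)) x = M (fun t i => m1 t i || m2 t i) x.
Proof.
rewrite /Mf /M; apply: eq_bigl => y; rewrite xpair_eqE !mproj_eqE.
apply/idP/idP.
  move=> /andP [/forallP h1 /forallP h2]; apply/forallP => t; apply/forallP => i.
  apply/implyP => /orP [mi|mi].
    by move/forallP: (h1 t) => /(_ i) /implyP; apply.
  by move/forallP: (h2 t) => /(_ i) /implyP; apply.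
move=> /forallP h; apply/andP; split; apply/forallP => t; apply/forallP => i;
  apply/implyP => mi; move/forallP: (h t) => /(_ i) /implyP; apply; by rewrite mi ?orbT.
Qed.

Lemma Pre0 x : Pre 0 x = 1.
Proof. by rewrite /Pre big_pred0 // => t; rewrite ltn0. Qed.

Lemma M_empty x : M (fun _ _ => false) x = 1.
Proof.
by rewrite (@M_ext _ (fun t _ => (t < 0)%N)) ?stoch ?Pre0.
Qed.

Lemma ln_prod (I : finType) (F : I -> R) :
  (forall i, 0 < F i) -> 0 < \prod_i F i /\ ln (\prod_i F i) = \sum_i ln (F i).
Proof.
move=> hF; apply: (big_ind2 (fun a b => 0 < a /\ ln a = b)).
- by rewrite ln1.
- move=> x1 x2 y1 y2 [p1 <-] [p2 <-]; split; first exact: mulr_gt0.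
  by rewrite lnM.
- by move=> i _; split.
Qed.

Definition V k x := M (fun t _ => (t < k)%N) x.
Definition Wk k i x := M (fun t j => (t < k)%N || (j == i)) x.
Definition U k i x := M (fun t j => (t < k)%N && (j == i)) x.
Definition Ml k j x := M (fun t i => (t < k)%N && (i < j)%N) x.

Lemma M_gt0 m x : 0 < P x -> 0 < M m x.
Proof. by move=> px; apply: lt_le_trans px (M_ge _ _). Qed.

Lemma lnQ tl k (Hl : forall t : 'I_H, lost tl t = (k <= t)%N) x : 0 < P x ->
  0 < Gamma_img sI T pi tl x /\
  ln (Gamma_img sI T pi tl x) = ln (V k x) + \sum_i (ln (Wk k i x) - ln (V k x)).
Proof.
move=> px; rewrite (@fact tl k Hl).
have Vp : 0 < V k x by apply: M_gt0.
have PreV : Pre k x = V k x by rewrite /V stoch.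
have OC : forall i, OWN k x i * C k x i = Wk k i x / V k x.
  move=> i; rewrite /Wk WE -PreV; field.
  by rewrite PreV; apply: lt0r_neq0.
under eq_bigr => i _ do rewrite OC.
have Wp : forall i : 'I_N, 0 < Wk k i x / V k x.
  by move=> i; apply: divr_gt0 => //; apply: M_gt0.
have [pp lp] := @ln_prod _ (fun i => Wk k i x / V k x) Wp.
rewrite PreV; split; first exact: mulr_gt0.
rewrite lnM ?posrE // lp; congr (_ + _); apply: eq_bigr => i _.
by rewrite ln_div ?posrE //; apply: M_gt0.
Qed.

Lemma decomp k x : 0 < P x ->
  (ln (V k x) + \sum_i (ln (Wk k i x) - ln (V k x))) -
  (ln (V 0 x) + \sum_i (ln (Wk 0 i x) - ln (V 0 x))) =
  \sum_(j < N) (ln (Ml k j.+1 x) + ln (M (fun _ _ => false) x)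
                  - ln (Ml k j x) - ln (U k j x)) +
  \sum_i (ln (Wk k i x) + ln (U k i x) - ln (V k x) - ln (Wk 0 i x)).
Proof.
move=> px.
have V0 : V 0 x = 1 by rewrite /V stoch Pre0.
rewrite V0 M_empty ln1.
have tel : \sum_(j < N) (ln (Ml k j.+1 x) - ln (Ml k j x)) =
    ln (Ml k N x) - ln (Ml k 0 x).
  by rewrite -(big_mkord xpredT (fun j => ln (Ml k j.+1 x) - ln (Ml k j x)))
     telescope_sumr.
have EN : Ml k N x = V k x.
  by rewrite /Ml /V; apply: M_ext => t i; rewrite ltn_ord andbT.
have E0 : Ml k 0 x = 1.
  by rewrite /Ml -(M_empty x); apply: M_ext => t i; rewrite ltn0 andbF.
rewrite EN E0 in tel.
have E1 : \sum_(j < N) (ln (Ml k j.+1 x) + 0 - ln (Ml k j x) - ln (U k j x)) =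
    ln (V k x) - \sum_(j < N) ln (U k j x).
  rewrite (eq_bigr (fun j : 'I_N => (ln (Ml k j.+1 x) - ln (Ml k j x)) - ln (U k j x)))
    => [|j _]; last by rewrite addr0.
  by rewrite sumrB tel ln1 subr0.
rewrite E1 !sumrB !big_split /= big1_eq; ring.
Qed.


Notation Qi tl := (@Gamma_img R N S A sI T pi tl H).

Lemma KLH tl k (Hl : forall t : 'I_H, lost tl t = (k <= t)%N) :
  (\sum_(x : X) kl_term (P x) (Gamma_img sI T pi tl x) <=
   \sum_(x : X) kl_term (P x) (Gamma_img sI T pi (Some 0%N) x))%E.
Proof.
have Hl0 : forall t : 'I_H, lost (Some 0%N) t = (0 <= t)%N by [].
pose g (Q : X -> R) x := if P x == 0 then 0 else P x * ln (P x / Q x).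
have klE : forall tl' k' (Hl' : forall t : 'I_H, lost tl' t = (k' <= t)%N) x,
    kl_term (P x) (Gamma_img sI T pi tl' x) = (g (Qi tl') x)%:E.
  move=> tl' k' Hl' x; rewrite /kl_term /g; case: eqP => // /eqP nz.
  have px : 0 < P x by rewrite lt_def nz P_ge0.
  have [q _] := @lnQ tl' k' Hl' x px.
  by rewrite gt_eqF.
rewrite (eq_bigr _ (fun x _ => klE _ _ Hl x)) (eq_bigr _ (fun x _ => klE _ _ Hl0 x)).
rewrite !sumEFin lee_fin -subr_ge0 -sumrB.
have term : forall x, g (Qi (Some 0%N)) x - g (Qi tl) x =
  P x * (\sum_(j < N) (ln (Ml k j.+1 x) + ln (M (fun _ _ => false) x)
                  - ln (Ml k j x) - ln (U k j x)) +
  \sum_i (ln (Wk k i x) + ln (U k i x) - ln (V k x) - ln (Wk 0 i x))).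
  move=> x; rewrite /g; case: eqP => [->|/eqP nz]; first by rewrite subrr mul0r.
  have px : 0 < P x by rewrite lt_def nz P_ge0.
  have [q1 l1] := @lnQ tl k Hl x px; have [q0 l0] := @lnQ _ 0 Hl0 x px.
  rewrite -decomp // -l1 -l0 !ln_div ?posrE //; ring.
rewrite (eq_bigr _ (fun x _ => term x)).
under eq_bigr => x _ do rewrite mulrDr !big_distrr.
rewrite big_split /= exchange_big /= [X in _ <= _ + X]exchange_big /=.
apply: addr_ge0; apply: sumr_ge0 => j _.
  have E : forall x, Ml k j.+1 x = Mf P (fun z =>
      (mproj (fun t (i : 'I_N) => (t < k)%N && (i < j)%N) z,
       mproj (fun t (i : 'I_N) => (t < k)%N && (i == j)) z)) x.
    move=> x; rewrite M_pair /Ml; apply: M_ext => t i /=.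
    rewrite -andb_orr; congr (_ && _).
    by rewrite ltnS leq_eqVlt orbC.
  under eq_bigr => x _ do rewrite E.
  apply: (@cmi R X P P_ge0 _ _ _ (mproj (fun _ _ => false))
    (mproj (fun t (i : 'I_N) => (t < k)%N && (i < j)%N))
    (mproj (fun t (i : 'I_N) => (t < k)%N && (i == j)))).
    by move=> a b; apply: mproj_sub.
  by move=> a b; apply: mproj_sub.
have E : forall x, Wk k j x = Mf P (fun z =>
    (mproj (fun t (i : 'I_N) => (t < k)%N) z,
     mproj (fun t (i : 'I_N) => (t < 0)%N || (i == j)) z)) x.
  by move=> x; rewrite M_pair /Wk; apply: M_ext => t i /=; rewrite ?ltn0.
under eq_bigr => x _ do rewrite E.
apply: (@cmi R X P P_ge0 _ _ _ (mproj (fun t (i : 'I_N) => (t < k)%N && (i == j)))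
   (mproj (fun t (i : 'I_N) => (t < k)%N))
   (mproj (fun t (i : 'I_N) => (t < 0)%N || (i == j)))).
  by move=> a b; apply: mproj_sub => t i /andP [].
by move=> a b; apply: mproj_sub => t i /andP [_ ->]; rewrite orbT.
Qed.

End Main.


Theorem lemma1 (R : realType) (N : nat) (S A : 'I_N -> finType)
  (sI : forall i, S i) (T : forall i, S i -> A i -> S i -> R)
  (pi : jstate S -> jact A -> R)
  (T_ge0 : forall i s a y, 0 <= T i s a y)
  (T_sum1 : forall i s a, \sum_(y : S i) T i s a y = 1)
  (pi_ge0 : forall s a, 0 <= pi s a)
  (pi_sum1 : forall s, \sum_(a : jact A) pi s a = 1)
  (tl : option nat) :
  (KL (Gamma_full sI T pi) (Gamma_img sI T pi tl)
     <= KL (Gamma_full sI T pi) (Gamma_img sI T pi (Some 0%N)))%E.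
Proof.
rewrite /KL; apply: ge_ereal_sup => _ [H _ <-].
have [k Hl] : exists k, forall t : 'I_H, lost tl t = (k <= t)%N.
  case: tl => [k|]; first by exists k.
  by exists H => t; rewrite /lost leqNgt ltn_ord.
apply: (le_trans (@KLH R N S A sI T pi T_ge0 T_sum1 pi_ge0 pi_sum1 H tl k Hl)).
by apply: ereal_sup_ubound; exists H.
Qed.
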